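(* Let $u\in V$ and let $N\subseteq V\setminus\{u\}$ be a nonempty set of vertices, and let $0<\alpha<1$. Suppose that $p_{uv}>0$ and $q^*_{uv}/p_{uv}<\alpha$ for every $v\in N$, and that $Q:=\sum_{v\in N} q^*_{uv}>0$. Put $$\delta=\frac{1-\exp\left(-Q/\alpha\right)}{Q}.$$ Then there is a probability distribution over orderings $\pi$ of $N$ such that, if $\pi$ is drawn from it independently of $G$ and the pairs $\{u,v\}$, $v\in N$, are inspected in the order $\pi$, then for every $v\in N$ the probability that $\{u,v\}$ is the first inspected pair that is an edge of $G$ is at least $\delta\, q^*_{uv}$.
   Context: Let $V$ be a finite vertex set with, for every unordered pair $\{u,v\}$ of distinct vertices, a probability $p_{uv}\in[0,1]$; let $\mathcal D$ be the distribution of the random graph $G$ on $V$ in which each pair $\{u,v\}$ is an edge independently with probability $p_{uv}$. Fix a rule $M$ assigning to every graph $H$ on $V$ a maximum matching $M(H)$ of $H$. Define $q^*_{uv}=\Pr_{H\sim\mathcal D}(\{u,v\}\in M(H))$. *)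

(* Defs.v *)
From HB Require Import structures.
From Stdlib Require Import Reals.
From mathcomp Require Import all_boot.
Set Implicit Arguments. Unset Strict Implicit. Unset Printing Implicit Defensive.

Lemma Rplus_assoc' : associative Rplus.
Proof. by move=> x y z; rewrite Rplus_assoc. Qed.
Lemma Rmult_assoc' : associative Rmult.
Proof. by move=> x y z; rewrite Rmult_assoc. Qed.
HB.instance Definition _ := Monoid.isComLaw.Build R R0 Rplus
  Rplus_assoc' Rplus_comm Rplus_0_l.
HB.instance Definition _ := Monoid.isComLaw.Build R R1 Rmult
  Rmult_assoc' Rmult_comm Rmult_1_l.

Section Defs.
Variable V : finType.

(* Unordered pairs {u,v}, u <> v, are the 2-element subsets of V. *)
Definition pairsV : {set {set V}} := [set e : {set V} | #|e| == 2%N].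

(* A graph on V is a set of unordered pairs H \subset pairsV. *)
Definition is_matching (H Mt : {set {set V}}) : bool :=
  (Mt \subset H) &&
  [forall e in Mt, forall f in Mt, (e != f) ==> [disjoint e & f]].

Definition is_max_matching (H Mt : {set {set V}}) : bool :=
  is_matching H Mt &&
  [forall Mt' : {set {set V}}, is_matching H Mt' ==> (#|Mt'| <= #|Mt|)%N].

(* p e = probability that the pair e is an edge (only used on pairs).
   Probability of the graph H under D. *)
Definition graphP (p : {set V} -> R) (H : {set {set V}}) : R :=
  \big[Rmult/R1]_(e in pairsV) (if e \in H then p e else (Rminus R1 (p e))).

Definition PrG (p : {set V} -> R) (P : {set {set V}} -> bool) : R :=
  \big[Rplus/R0]_(H in powerset pairsV) (Rmult (graphP p H) (if P H then R1 else R0)).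

Definition qstar (p : {set V} -> R) (M : {set {set V}} -> {set {set V}})
  (u v : V) : R := PrG p (fun H => [set u; v] \in M H).

Definition is_ordering (N : {set V}) (s : seq V) : Prop :=
  uniq s /\ (forall x, (x \in s) = (x \in N)).

Definition first_edge (u : V) (s : seq V) (v : V) (H : {set {set V}}) : bool :=
  [&& v \in s, [set u; v] \in H &
      all (fun w => [set u; w] \notin H) (take (index v s) s)].

End Defs.

(* Main.v *)
Require Import Defs.
From HB Require Import structures.
From Stdlib Require Import Reals Lra.
From mathcomp Require Import all_boot.
Open Scope R_scope.
HB.instance Definition _ := Monoid.isMulLaw.Build R R0 Rmult Rmult_0_l Rmult_0_r.
HB.instance Definition _ := Monoid.isAddLaw.Build R Rmult Rplus Rmult_plus_distr_r Rmult_plus_distr_l.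

Lemma Rsum_le (I : Type) (r : seq I) (P : pred I) (F G : I -> R) :
  (forall i, P i -> F i <= G i) ->
  \big[Rplus/0]_(i <- r | P i) F i <= \big[Rplus/0]_(i <- r | P i) G i.
Proof. move=> H; apply: (big_ind2 (fun x y => x <= y)); [lra | move=> *; lra | exact: H]. Qed.

Lemma Rsum_ge0 (I : Type) (r : seq I) (P : pred I) (F : I -> R) :
  (forall i, P i -> 0 <= F i) -> 0 <= \big[Rplus/0]_(i <- r | P i) F i.
Proof. move=> H; apply: (big_ind (fun x => 0 <= x)); [lra | move=> *; lra | exact: H]. Qed.

Lemma Rprod_ge0 (I : Type) (r : seq I) (P : pred I) (F : I -> R) :
  (forall i, P i -> 0 <= F i) -> 0 <= \big[Rmult/1]_(i <- r | P i) F i.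
Proof. move=> H; apply: (big_ind (fun x => 0 <= x)); [lra | move=> *; nra | exact: H]. Qed.

Lemma Rprod_ind01 (I : finType) (P : pred I) (b : I -> bool) :
  \big[Rmult/1]_(i | P i) (if b i then 1 else 0) = if [forall (i | P i), b i] then 1 else 0.
Proof.
case: ifP => [/forallP H|/negbT].
  by apply: big1 => i Pi; move: (H i); rewrite Pi /= => ->.
rewrite negb_forall => /existsP [i]; rewrite negb_imply => /andP [Pi nbi].
by rewrite (bigD1 i) //= (negbTE nbi) Rmult_0_l.
Qed.
Section PrGsec.
Variable V : finType.
Variable p : {set V} -> R.

Lemma PrG_forall (c : {set V} -> bool -> bool) :
  PrG p (fun H => [forall e in pairsV V, c e (e \in H)]) =
  \big[Rmult/1]_(e in pairsV V) (p e * (if c e true then 1 else 0) + (1 - p e) * (if c e false then 1 else 0)).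
Proof.
pose F e (b : bool) := if e \in pairsV V then (if b then p e else 1 - p e) * (if c e b then 1 else 0) else (if b then 0 else 1).
transitivity (\big[Rmult/1]_(e : {set V}) \big[Rplus/0]_(b : bool) F e b); last first.
  rewrite [RHS]big_mkcond; apply: eq_bigr => e _; rewrite big_bool /F.
  case: (e \in pairsV V); simpl; lra.
rewrite bigA_distr_bigA.
rewrite (reindex (fun H : {set {set V}} => [ffun e => e \in H])); last first.
  exists (fun f : {ffun {set V} -> bool} => [set e | f e]); move=> H _.
    by apply/setP => e; rewrite inE ffunE.
  by apply/ffunP => e; rewrite ffunE inE.
rewrite /PrG big_mkcond; apply: eq_bigr => H _.
under eq_bigr do rewrite ffunE.
rewrite powersetE; case: ifP => [sub|/negbT nsub].
  rewrite /graphP -Rprod_ind01 -big_split /= big_mkcond; apply: eq_bigr => e _.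
  rewrite /F; case: ifP => // epV.
  have -> : (e \in H) = false by apply/negbTE; apply: contraFN epV => /(subsetP sub).
  done.
move: nsub => /subsetPn [e eH enp].
by rewrite (bigD1 e) //= /F (negbTE enp) eH Rmult_0_l.
Qed.

End PrGsec.
Section PrGsec2.
Variable V : finType.
Variable p : {set V} -> R.
Hypothesis pb : forall e, e \in pairsV V -> 0 <= p e <= 1.

Lemma graphP_ge0 H : 0 <= graphP p H.
Proof. apply: Rprod_ge0 => e /pb; case: (e \in H); lra. Qed.

Lemma PrG_ge0 P : 0 <= PrG p P.
Proof. apply: Rsum_ge0 => H _; have := graphP_ge0 H; case: (P H); nra. Qed.

Lemma PrG_mono (P P' : pred {set {set V}}) :
  (forall H : {set {set V}}, H \subset pairsV V -> P' H -> P H) -> PrG p P' <= PrG p P.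
Proof.
move=> imp; rewrite /PrG; apply: Rsum_le => H Hin.
have sub : H \subset pairsV V by rewrite -powersetE.
have := graphP_ge0 H; have := imp H sub.
case: (P' H); case: (P H) => //; try nra. by move=> /(_ isT).
Qed.

Lemma pair_in (u w : V) : u != w -> [set u; w] \in pairsV V.
Proof. by move=> uw; rewrite inE cards2 uw. Qed.

Lemma first_edge_lb (u v : V) (N W : {set V}) (s : seq V) :
  u \notin N -> v \in N -> W \subset N -> v \notin W -> v \in s ->
  (forall w, w \in take (index v s) s -> w \in W) ->
  p [set u; v] * \big[Rmult/1]_(w in W) (1 - p [set u; w]) <= PrG p (first_edge u s v).
Proof.
move=> uN vN WN vW vs tW.
have uneq : forall w, w \in N -> u != w by move=> w wN; apply: contraNneq uN => ->.
pose T := [set [set u; w] | w in W].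
pose c e (b : bool) := if e == [set u; v] then b else if e \in T then ~~ b else true.
have inj : {in W &, injective (fun w => [set u; w])}.
  move=> w1 w2 w1W w2W /setP /(_ w1); rewrite !inE eqxx orbT.
  have := uneq w1 (subsetP WN _ w1W); rewrite eq_sym => /negbTE -> /=; by case: eqP.
have uvT : [set u; v] \notin T.
  apply/imsetP => [[w wW /setP /(_ v)]]; rewrite !inE eqxx orbT eq_sym (negbTE (uneq v vN)) /=.
  by move=> /esym /eqP vw; move: vW; rewrite vw wW.
apply: (@Rle_trans _ (PrG p (fun H : {set {set V}} => [forall e in pairsV V, c e (e \in H)])) _); last first.
  apply: PrG_mono => H sub /forallP /= all.
  have h1 := all [set u; v]; rewrite pair_in /= in h1; last by apply: uneq.
  rewrite /c eqxx in h1.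
  rewrite /first_edge vs h1 /=; apply/allP => w wt; have wW := tW w wt.
  have wT : [set u; w] \in T by apply: imset_f.
  have ne : ([set u; w] == [set u; v]) = false by apply/eqP => e; move: uvT; rewrite -e wT.
  have h2 := all [set u; w]; rewrite pair_in /= in h2; last by apply: uneq; apply: (subsetP WN).
  by rewrite /c ne wT in h2.
rewrite PrG_forall.
rewrite (bigD1 [set u; v]) /=; last by apply: pair_in; apply: uneq.
rewrite {1}/c eqxx.
rewrite (bigID (fun e => e \in T)) /=.
rewrite [X in _ * (_ * X)]big1 => [|e /andP [/andP [_ ne] nT]]; last first.
  rewrite /c (negbTE ne) (negbTE nT) /=; lra.
rewrite (eq_bigl (fun e => e \in T)) => [|e]; last first.
  case eT: (e \in T); last by rewrite andbF.
  move: (eT) => /imsetP [w wW ->]; rewrite pair_in /=; last by apply: uneq; apply: (subsetP WN).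
  have -> // : ([set u; w] != [set u; v]) by apply/eqP => e'; move: uvT; rewrite -e' (imset_f _ wW).
rewrite (eq_bigr (fun e => 1 - p e)) => [|e eT]; last first.
  have ne : (e == [set u; v]) = false by apply/eqP => e'; move: uvT; rewrite -e' eT.
  rewrite /c ne. rewrite eT /=; lra.
rewrite big_imset //= /c eqxx /=; apply: Req_le; ring.
Qed.
End PrGsec2.
Lemma tele (n : nat) (f : nat -> R) :
  \big[Rplus/0]_(j < n) (f j - f j.+1) = f 0%N - f n.
Proof.
elim: n => [|n IH]; first by rewrite big_ord0; simpl; lra.
rewrite big_ord_recr /= IH; lra.
Qed.

Lemma tele_cut (n k : nat) (f : nat -> R) :
  \big[Rplus/0]_(j < n) (if (j <= k)%N then f j - f j.+1 else 0) = f 0%N - f (minn n k.+1).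
Proof.
elim: n => [|n IH]; first by rewrite big_ord0 min0n; simpl; lra.
rewrite big_ord_recr /= IH.
case: (leqP n k) => h.
  have -> : minn n k.+1 = n by apply/minn_idPl; apply: leqW.
  have -> : minn n.+1 k.+1 = n.+1 by apply/minn_idPl.
  lra.
have -> : minn n k.+1 = k.+1 by apply/minn_idPr; apply: h.
have -> : minn n.+1 k.+1 = k.+1 by apply/minn_idPr; apply: ltnW.
lra.
Qed.

Lemma sum_ind (n m : nat) (X : R) :
  \big[Rplus/0]_(k < n) (if m == k then X else 0) = if (m < n)%N then X else 0.
Proof.
case: ltnP => h.
  rewrite (bigD1 (Ordinal h)) //= eqxx big1 /=; first lra.
  by move=> i /negbTE ne; rewrite eq_sym -(inj_eq val_inj) /= in ne; rewrite ne.
apply: big1 => i _; case: eqP => // e; move: (ltn_ord i); rewrite -e ltnNge h //.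
Qed.
Section Nu.
Variable V : finType.
Variable N : {set V}.
Variable K : nat.
Variable E : V -> nat -> R.
Variable pp : V -> R.
Hypothesis E0 : forall w, E w 0%N = 1.
Hypothesis ppos : forall w, w \in N -> 0 < pp w.

Definition nu (w : V) (j : nat) : R :=
  if w \in N then
    (if (j < K)%N then (E w j - E w j.+1) / pp w
     else if j == K then 1 - (1 - E w K) / pp w else 0)
  else (if j == 0%N then 1 else 0).

Lemma sum_nu w : \big[Rplus/0]_(j < K.+1) nu w j = 1.
Proof.
unfold nu; case wN: (w \in N).
  rewrite big_ord_recr /= ltnn eqxx.
  rewrite (eq_bigr (fun j : 'I_K => E w j / pp w - E w j.+1 / pp w)) => [|j _]; last first.
    rewrite ltn_ord; have := ppos w wN; move=> ?; field; lra.
  rewrite (tele K (fun j => E w j / pp w)) /= E0; have := ppos w wN => ?; field; lra.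
rewrite big_ord_recl /= big1 => [|j _] /=; [lra|done].
Qed.

Lemma sum_phi_v v k : v \in N -> (k < K)%N ->
  \big[Rplus/0]_(j < K.+1) (nu v j * (if (j : nat) == k then pp v else 0)) = E v k - E v k.+1.
Proof.
move=> vN kK.
rewrite (eq_bigr (fun j : 'I_K.+1 => if k == j then nu v k * pp v else 0)) => [|j _]; last first.
  by rewrite eq_sym; case: eqP => [->|_] //; rewrite Rmult_0_r.
rewrite sum_ind ltnS (ltnW kK) /nu vN kK; have := ppos v vN => ?; field; lra.
Qed.

Lemma sum_phi_w w k : w \in N -> (k < K)%N ->
  \big[Rplus/0]_(j < K.+1) (nu w j * (if (j <= k)%N then 1 - pp w else 1)) = E w k.+1.
Proof.
move=> wN kK.
rewrite big_ord_recr /= /nu wN ltnn eqxx leqNgt kK /=.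
rewrite (eq_bigr (fun j : 'I_K => (E w j / pp w - E w j.+1 / pp w) -
   (if (j <= k)%N then E w j - E w j.+1 else 0))) => [|j _]; last first.
  rewrite ltn_ord; have := ppos w wN => ?; case: ifP => _; field; lra.
rewrite big_split /= (tele K (fun j => E w j / pp w)) /=.
have -> : \big[Rplus/0]_(i < K) - (if (i <= k)%N then E w i - E w i.+1 else 0)
   = - \big[Rplus/0]_(i < K) (if (i <= k)%N then E w i - E w i.+1 else 0).
  by symmetry; apply: (big_morph Ropp); [move=> x y; lra | lra].
rewrite (tele_cut K k (E w)) E0.
have -> : minn K k.+1 = k.+1 by apply/minn_idPr.
have := ppos w wN => ?; field; lra.
Qed.

Lemma sum_phi_out w : w \notin N -> \big[Rplus/0]_(j < K.+1) (nu w j * 1) = 1.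
Proof.
move=> wN; rewrite /nu (negbTE wN) big_ord_recl /= big1 => [|j _] /=; lra.
Qed.

Lemma nu_ge0 w j : (forall w, w \in N -> forall j, E w j.+1 <= E w j) ->
  (forall w, w \in N -> 1 - E w K <= pp w) -> 0 <= nu w j.
Proof.
move=> dec feas; rewrite /nu; case: ifP => wN; last by case: eqP => _; lra.
have := ppos w wN => pw.
case: ifP => _.
  apply: Rmult_le_pos; first by have := dec w wN j; lra.
  by apply: Rlt_le; apply: Rinv_0_lt_compat.
case: eqP => _; last lra.
have := feas w wN => f.
have : (1 - E w K) / pp w <= 1.
  apply: (Rmult_le_reg_r (pp w)) => //; field_simplify; lra.
lra.
Qed.

End Nu.
Section Ord.
Variable V : finType.
Variable N : {set V}.
Variable K : nat.

Definition ordr (r : {ffun V -> 'I_K.+1}) : seq V :=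
  sort (fun a b : V => (r a <= r b)%N) (enum N).

Lemma ordr_ok r : is_ordering N (ordr r).
Proof.
split; first by rewrite sort_uniq enum_uniq.
by move=> x; rewrite mem_sort mem_enum.
Qed.

Lemma ordr_before r v w : v \in N -> w \in take (index v (ordr r)) (ordr r) ->
  w \in [set w in N | (w != v) && (r w <= r v)%N].
Proof.
move=> vN wt.
set s := ordr r in wt *.
have vs : v \in s by rewrite mem_sort mem_enum.
have ws : w \in s by apply: (mem_take wt).
set i := index v s in wt.
have iS : (i < size s)%N by rewrite index_mem.
set j := index w (take i s).
have jt : (j < size (take i s))%N by rewrite index_mem.
have ji : (j < i)%N by move: jt; rewrite size_take iS.
have wj : nth w s j = w by rewrite -(nth_take _ ji) nth_index.
have vi : nth w s i = v by rewrite nth_index.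
have srt : sorted (fun a b : V => (r a <= r b)%N) s.
  apply: sort_sorted => a b; exact: leq_total.
rewrite !inE -(mem_enum (mem N)) -(mem_sort (fun a b : V => (r a <= r b)%N)) -/s ws /=.
apply/andP; split.
  apply/eqP => wv.
  have := before_find w ji; rewrite /= wj wv eqxx //.
have := sorted_leq_nth (fun a b c => @leq_trans _ _ _) (fun a => leqnn _) w srt.
move=> /(_ j i); rewrite !inE (ltn_trans ji iS) iS wj vi => /(_ isT isT (ltnW ji)) //.
Qed.
End Ord.
Lemma In_map_seq (A B : Type) (f : A -> B) (l : seq A) (y : B) :
  List.In y (map f l) -> exists x, y = f x.
Proof. elim: l => //= a l IH [<-|/IH //]; by exists a. Qed.

Set Implicit Arguments. Unset Strict Implicit.
Section Main.
Variable V : finType.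
Variable p : {set V} -> R.
Hypothesis pb : forall e, e \in pairsV V -> 0 <= p e <= 1.
Variable u : V.
Variable N : {set V}.
Hypothesis uN : u \notin N.
Variable K : nat.
Variable E : V -> nat -> R.
Hypothesis E0 : forall w, E w 0%N = 1.
Hypothesis ppos : forall w, w \in N -> 0 < p [set u; w].
Hypothesis dec : forall w, w \in N -> forall j, E w j.+1 <= E w j.
Hypothesis feas : forall w, w \in N -> 1 - E w K <= p [set u; w].

Let pp w := p [set u; w].
Let nuw := @nu V N K E pp.

Definition prob (r : {ffun V -> 'I_K.+1}) := \big[Rmult/1]_w nuw w (r w).

Definition Dl := [seq (prob r, @ordr V N K r) | r <- enum {ffun V -> 'I_K.+1}].

Lemma prob_ge0 r : 0 <= prob r.
Proof. apply: Rprod_ge0 => w _; apply: (@nu_ge0 V N K E pp) => //. Qed.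

Lemma Dl_ok x : List.In x Dl -> 0 <= x.1 /\ is_ordering N x.2.
Proof. move=> H; have [r ->] := @In_map_seq _ _ _ _ _ H; simpl; split; [exact: prob_ge0 | exact: (@ordr_ok V N K)]. Qed.

Lemma Dl_sum : \big[Rplus/0]_(x <- Dl) x.1 = 1.
Proof.
rewrite big_map /= big_enum /=.
rewrite /prob -(bigA_distr_bigA (fun w (j : 'I_K.+1) => nuw w j)).
by apply: big1 => w _; apply: (@sum_nu V N K E pp).
Qed.


Lemma Dl_bound v : v \in N ->
  \big[Rplus/0]_(k < K) ((E v k - E v k.+1) *
      \big[Rmult/1]_(w | w != v) (if w \in N then E w k.+1 else 1))
  <= \big[Rplus/0]_(x <- Dl) (x.1 * PrG p (first_edge u x.2 v)).
Proof.
move=> vN.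
pose psi (k : nat) (w : V) (j : nat) := if w == v then (if j == k then pp v else 0)
  else if (w \in N) && (j <= k)%N then 1 - pp w else 1.
transitivity (\big[Rplus/0]_(k < K) \big[Rmult/1]_(w : V) \big[Rplus/0]_(j : 'I_K.+1) (nuw w j * psi k w j)).
  apply: Req_le; apply: eq_bigr => k _.
  rewrite [RHS](bigD1 v) //; simpl; congr Rmult.
    rewrite /psi eqxx; symmetry; exact: (@sum_phi_v V N K E pp).
  apply: eq_bigr => w wv; rewrite /psi (negbTE wv).
  case wN: (w \in N) => /=.
    symmetry; exact: (@sum_phi_w V N K E pp).
  symmetry; rewrite /nuw; apply: (@sum_phi_out V N K E pp); by rewrite wN.
rewrite [X in X <= _](eq_bigr (fun k : 'I_K => \big[Rplus/0]_(f : {ffun V -> 'I_K.+1}) \big[Rmult/1]_w (nuw w (f w) * psi k w (f w)))); last first.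
  by move=> k _; rewrite (bigA_distr_bigA (fun w (j:'I_K.+1) => nuw w j * psi k w j)).
rewrite exchange_big /= big_map /= big_enum /=.
apply: Rsum_le => r _.
pose W := [set w in N | (w != v) && (r w <= r v)%N].
have WN : W \subset N by apply/subsetP => w; rewrite inE => /andP [].
have vW : v \notin W by rewrite inE eqxx /= andbF.
have vs : v \in ordr V N K r by rewrite mem_sort mem_enum.
have lb := @first_edge_lb V p pb u v N W (ordr V N K r) uN vN WN vW vs
   (fun w => @ordr_before V N K r v w vN).
have PW : 0 <= pp v * \big[Rmult/1]_(w in W) (1 - pp w).
  apply: Rmult_le_pos; first by rewrite /pp; have := ppos vN; lra.
  apply: Rprod_ge0 => w; rewrite inE => /andP [wN _].
  have : [set u; w] \in pairsV V.
    by apply: pair_in; apply: contraNneq uN => ->.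
  move=> /pb; rewrite /pp. lra.
have step : forall k : 'I_K, \big[Rmult/1]_w (nuw w (r w) * psi k w (r w)) =
   if (r v : nat) == k then prob r * (pp v * \big[Rmult/1]_(w in W) (1 - pp w)) else 0.
  move=> k; rewrite big_split /= [X in _ * X](bigD1 v) //= /psi eqxx.
  case: eqP => [e|_]; last by rewrite /prob; simpl; ring.
  rewrite /prob; congr (_ * (_ * _)).
  rewrite big_mkcond [RHS]big_mkcond; apply: eq_bigr => w _; rewrite /psi inE -e.
  by case: (w == v); case: (w \in N).
rewrite (eq_bigr _ (fun k _ => step k)) sum_ind.
apply: (@Rle_trans _ (prob r * (pp v * \big[Rmult/1]_(w in W) (1 - pp w)))).
  by case: ifP => _; [lra | apply: Rmult_le_pos => //; apply: prob_ge0].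
apply: Rmult_le_compat_l; [exact: prob_ge0 | exact: lb].
Qed.
End Main.
Unset Implicit Arguments.

Lemma exists_lb (T : eqType) (s : seq T) (f : T -> R) :
  (forall w, w \in s -> 0 < f w) -> exists m, 0 < m /\ forall w, w \in s -> m <= f w.
Proof.
elim: s => [|a s IH] H; first by exists 1; split; [lra|].
have [m [m0 hm]] : exists m, 0 < m /\ forall w, w \in s -> m <= f w.
  by apply: IH => w ws; apply: H; rewrite inE ws orbT.
have fa : 0 < f a by apply: H; rewrite inE eqxx.
exists (Rmin m (f a)); split; first by apply: Rmin_pos.
move=> w; rewrite inE => /orP [/eqP ->|ws]; first exact: Rmin_r.
apply: Rle_trans (Rmin_l _ _) (hm w ws).
Qed.

Lemma one_m_exp (y : R) : 1 - exp (- y) <= y.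
Proof. have := exp_ineq1_le (- y); lra. Qed.

Lemma L1 (K : nat) (y : R) : 0 <= y ->
  exp (- y) - exp (- (INR K.+1 * y)) <= y * \big[Rplus/0]_(k < K) exp (- (INR k.+1 * y)).
Proof.
move=> y0.
rewrite big_distrr.
have H := tele K (fun j => exp (- (INR j.+1 * y))); cbv beta in H.
have E1 : INR 1 = 1 by [].
rewrite E1 Rmult_1_l in H; rewrite -H.
apply: Rsum_le => k _.
have -> : exp (- (INR k.+2 * y)) = exp (- (INR k.+1 * y)) * exp (- y).
  rewrite -exp_plus; congr exp; rewrite (S_INR k.+1); ring.
change (exp (- (INR k.+1 * y)) - exp (- (INR k.+1 * y)) * exp (- y) <= y * exp (- (INR k.+1 * y))).
have := one_m_exp y; have := exp_pos (- (INR k.+1 * y)); nra.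
Qed.

Lemma term_lb (k : nat) (b y : R) : 0 <= b ->
  b * exp (- (INR k.+1 * y)) <=
  (exp (- (INR k * b)) - exp (- (INR k.+1 * b))) * exp (- (INR k.+1 * (y - b))).
Proof.
move=> b0.
have -> : (exp (- (INR k * b)) - exp (- (INR k.+1 * b))) * exp (- (INR k.+1 * (y - b)))
  = (exp b - 1) * exp (- (INR k.+1 * y)).
  rewrite Rmult_minus_distr_r -!exp_plus Rmult_minus_distr_r Rmult_1_l -exp_plus.
  congr (exp _ - exp _); rewrite S_INR; ring.
have := exp_ineq1_le b; have := exp_pos (- (INR k.+1 * y)); nra.
Qed.

Lemma exp_le' (x y : R) : x <= y -> exp x <= exp y.
Proof. move=> h; case: (Rle_lt_or_eq_dec _ _ h) => [l|->]; [apply: Rlt_le; exact: exp_increasing | lra]. Qed.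

Theorem corollary1 (V : finType) (p : {set V} -> R)
  (M : {set {set V}} -> {set {set V}}) (u : V) (N : {set V}) (alpha : R) :
  (forall e, e \in pairsV V -> 0 <= p e <= 1) ->
  (forall H : {set {set V}}, H \subset pairsV V -> is_max_matching H (M H)) ->
  u \notin N -> N != set0 -> 0 < alpha < 1 ->
  (forall v, v \in N ->
     0 < p [set u; v] /\ qstar p M u v / p [set u; v] < alpha) ->
  let Q := \big[Rplus/0]_(v in N) qstar p M u v in
  0 < Q ->
  let delta := (1 - exp (- (Q / alpha))) / Q in
  exists D : seq (R * seq V),
    (forall x, List.In x D -> 0 <= x.1 /\ is_ordering N x.2) /\
    \big[Rplus/0]_(x <- D) x.1 = 1 /\
    (forall v, v \in N ->
       delta * qstar p M u v <=
       \big[Rplus/0]_(x <- D) (x.1 * PrG p (first_edge u x.2 v))).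
Proof.
move=> pb _ uN _ [a0 a1] hyp Q Qpos delta.
have q0 : forall w, 0 <= qstar p M u w by move=> w; apply: PrG_ge0.
have pN : forall w, w \in N -> 0 < p [set u; w] /\ p [set u; w] <= 1.
  move=> w wN; split; first by case: (hyp w wN).
  have : [set u; w] \in pairsV V by apply: pair_in; apply: contraNneq uN => ->.
  by move=> /pb [].
have qlt : forall w, w \in N -> qstar p M u w < alpha * p [set u; w].
  move=> w wN; have [pw hq] := hyp w wN.
  have -> : qstar p M u w = qstar p M u w / p [set u; w] * p [set u; w] by field; lra.
  by apply: Rmult_lt_compat_r.
have [m [m0 hm]] := exists_lb _ (enum N) (fun w => alpha * p [set u; w] - qstar p M u w)
  (fun w wN => ltac:(have := qlt w; rewrite mem_enum in wN; move=> /(_ wN); lra)).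
pose c := 1 + m.
have cq : forall w, w \in N -> c * qstar p M u w <= alpha * p [set u; w].
  move=> w wN; have := hm w; rewrite mem_enum => /(_ wN) /= h.
  have := qlt w wN; have := pN w wN; have := q0 w; rewrite /c => q0w [pw0 pw1] qw.
  have h1 : alpha * p [set u; w] <= alpha by nra.
  have h2 : m * qstar p M u w <= m by nra.
  nra.
pose a w := c / alpha * qstar p M u w.
pose x := Q / alpha.
pose A := c * x.
have a0' : forall w, 0 <= a w.
  move=> w; rewrite /a /c; apply: Rmult_le_pos => //; apply: Rmult_le_pos; first lra.
  by apply: Rlt_le; apply: Rinv_0_lt_compat.
have Asum : \big[Rplus/0]_(w in N) a w = A.
  rewrite /a -big_distrr /= -/Q /A /x /c; field; lra.
have xpos : 0 < x by apply: Rdiv_lt_0_compat.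
have Apos : 0 < A by rewrite /A /c; nra.
have Ax : x < A by rewrite /A /c; nra.
pose eps := exp (- x) - exp (- A).
have epos : 0 < eps by rewrite /eps; have := exp_increasing (- A) (- x); lra.
have [K [HK K0]] := archimed_cor1 (eps / A) (Rdiv_lt_0_compat _ _ epos Apos).
have KR : 0 < INR K by apply: lt_0_INR.
pose E w (j : nat) := exp (- (INR j * (a w / INR K))).
have E0 : forall w, E w 0%N = 1.
  by move=> w; rewrite /E /= Rmult_0_l Ropp_0 exp_0.
have ppos : forall w, w \in N -> 0 < p [set u; w] by move=> w /pN [].
have dec : forall w, w \in N -> forall j, E w j.+1 <= E w j.
  move=> w _ j; rewrite /E; apply: exp_le'; rewrite S_INR.
  have := a0' w; have : 0 < / INR K by apply: Rinv_0_lt_compat.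
  rewrite /Rdiv; have := pos_INR j; nra.
have feas : forall w, w \in N -> 1 - E w K <= p [set u; w].
  move=> w wN; rewrite /E.
  have -> : INR K * (a w / INR K) = a w by field; lra.
  apply: Rle_trans (one_m_exp _) _.
  rewrite /a; have := cq w wN; have := pN w wN; move=> *.
  apply: (Rmult_le_reg_l alpha); first lra.
  have -> : alpha * (c / alpha * qstar p M u w) = c * qstar p M u w by field; lra.
  nra.
exists (Dl p u N K E); split; first by move=> y; apply: Dl_ok.
split; first exact: Dl_sum.
move=> v vN.
apply: Rle_trans (Dl_bound pb uN E0 ppos dec feas vN).
pose y := A / INR K.
pose b := a v / INR K.
pose g w := if w \in N then a w else 0.
have gsum : \big[Rplus/0]_(w | w != v) g w = A - a v.
  have h : \big[Rplus/0]_w g w = A by rewrite -Asum [RHS]big_mkcond.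
  rewrite (bigD1 v) //= in h.
  have gv : g v = a v by rewrite /g vN.
  simpl in h; lra.
have prodE : forall k : nat,
    \big[Rmult/1]_(w | w != v) (if w \in N then E w k.+1 else 1) = exp (- (INR k.+1 * (y - b))).
  move=> k.
  rewrite (eq_bigr (fun w => exp ((- (INR k.+1 / INR K)) * g w))) => [|w _]; last first.
    rewrite /g /E; case: (w \in N); first by congr exp; field; lra.
    by rewrite Rmult_0_r exp_0.
  rewrite -(big_morph exp exp_plus exp_0) -big_distrr /= gsum.
  congr exp; rewrite /y /b; field; lra.
have S1 : \big[Rplus/0]_(k < K) (b * exp (- (INR k.+1 * y))) <=
   \big[Rplus/0]_(k < K) ((E v k - E v k.+1) *
     \big[Rmult/1]_(w | w != v) (if w \in N then E w k.+1 else 1)).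
  apply: Rsum_le => k _; rewrite prodE; apply: term_lb.
  rewrite /b /Rdiv; apply: Rmult_le_pos => //; by apply: Rlt_le; apply: Rinv_0_lt_compat.
apply: Rle_trans S1; rewrite -big_distrr.
set S := \big[Rplus/0]_(k < K) exp (- (INR k.+1 * y)).
have ypos : 0 < y by apply: Rdiv_lt_0_compat.
have L := L1 K y (Rlt_le _ _ ypos); rewrite -/S in L.
have eK : exp (- (INR K.+1 * y)) = exp (- y) * exp (- A).
  rewrite -exp_plus; congr exp; rewrite S_INR /y; field; lra.
have yeps : y <= eps.
  rewrite /y /Rdiv; apply: Rlt_le.
  have : A * / INR K < A * (eps / A) by apply: Rmult_lt_compat_l.
  have -> : A * (eps / A) = eps by field; lra.
  done.
have ey : 1 - y <= exp (- y) by have := exp_ineq1_le (- y); lra.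
have eA : 0 <= 1 - exp (- A) by have := exp_increasing (- A) 0; rewrite exp_0; lra.
have yS : 1 - exp (- x) <= y * S.
  rewrite eK in L.
  have : (1 - y) * (1 - exp (- A)) <= exp (- y) * (1 - exp (- A)) by apply: Rmult_le_compat_r.
  have := exp_pos (- A). rewrite /eps in yeps. nra.
have bdef : b = qstar p M u v / Q * y.
  rewrite /b /y /a /A /x; field; split; lra.
rewrite bdef /delta -/x.
have qQ : 0 <= qstar p M u v / Q by apply: Rmult_le_pos => //; apply: Rlt_le; apply: Rinv_0_lt_compat.
have := Rmult_le_compat_l _ _ _ qQ yS.
change (qstar p M u v / Q * (1 - exp (- x)) <= qstar p M u v / Q * (y * S) ->
  (1 - exp (- x)) / Q * qstar p M u v <= qstar p M u v / Q * y * S).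
move=> hh.
have -> : (1 - exp (- x)) / Q * qstar p M u v = qstar p M u v / Q * (1 - exp (- x)) by field; lra.
have -> : qstar p M u v / Q * y * S = qstar p M u v / Q * (y * S) by ring.
exact: hh.
Qed.
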